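(* Let $X \subset \mathbb{R}^d$ be a closed subset, let $\mu$ be an admissible, $X$-indeterminate measure, and let $S \subset X$ be the closed support of $\mu$. Let $\phi \in C_p(X)$ satisfy $$ \inf_{p \leq \phi \text{ on } X} \int (\phi-p)\, d\mu > 0$$ (infimum over real polynomials $p$). Let $\psi \in C_p(X)$ satisfy $\psi(x) \leq \phi(x)$ for all $x \in X \setminus S$. Define $\Phi(x)=\phi(x)$ for $x\in S$ and $\Phi(x)=\psi(x)$ for $x \in X\setminus S$. Then $$ \inf_{p \leq \Phi \text{ on } X} \int (\Phi-p)\, d\mu > 0.$$
   Context: An admissible measure on a closed set $X \subseteq \mathbb{R}^d$ is a positive Radon measure $\mu$ supported on $X$ such that $\int_X |p|\,d\mu<\infty$ for every polynomial $p$. $\mu$ is $X$-indeterminate if there is an admissible measure on $X$, distinct from $\mu$, giving the same integral to every polynomial. $C_p(X)$ denotes the continuous real functions $f$ on $X$ with $|f(x)|\le C(1+\|x\|)^n$ for some constants $C,n$. *)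

(* Defs.v *)
From HB Require Import structures.
From mathcomp Require Import all_boot all_order all_algebra.
From mathcomp Require Import all_classical all_reals all_analysis.
From mathcomp Require mpoly.
Set Implicit Arguments. Unset Strict Implicit. Unset Printing Implicit Defensive.
Import Order.TTheory GRing.Theory Num.Theory.
Import numFieldNormedType.Exports.
Local Open Scope classical_set_scope.
Local Open Scope ring_scope.

(* R^d is modelled as row vectors 'rV[R]_d (with its normed topology).
   Rd R d is the same carrier equipped with the Borel sigma-algebra
   (the sigma-algebra generated by the open sets). *)
Definition Rd (R : realType) (d : nat) :=
  g_sigma_algebraType (@open 'rV[R]_d).

Definition peval (R : realType) (d : nat) (p : mpoly.mpoly d R)
  (x : 'rV[R]_d) : R := mpoly.meval (fun i : 'I_d => x ord0 i) p.

Definition supported_on (R : realType) (d : nat)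
  (mu : {measure set (Rd R d) -> \bar R}) (X : set 'rV[R]_d) : Prop :=
  mu (~` X : set (Rd R d)) = 0%E.

(* admissible measure on X: positive (Radon) Borel measure supported on X
   integrating |p| finitely for every polynomial p.  (Any such measure is
   finite, hence Radon on R^d.) *)
Definition admissible (R : realType) (d : nat) (X : set 'rV[R]_d)
  (mu : {measure set (Rd R d) -> \bar R}) : Prop :=
  supported_on mu X /\
  forall p : mpoly.mpoly d R,
    (\int[mu]_x (`|peval p x|)%:E < +oo)%E.

Definition X_indeterminate (R : realType) (d : nat) (X : set 'rV[R]_d)
  (mu : {measure set (Rd R d) -> \bar R}) : Prop :=
  exists nu : {measure set (Rd R d) -> \bar R},
    admissible X nu /\
    (exists A : set (Rd R d), measurable A /\ nu A <> mu A) /\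
    forall p : mpoly.mpoly d R,
      (\int[nu]_x (peval p x)%:E = \int[mu]_x (peval p x)%:E)%E.

Definition msupport (R : realType) (d : nat)
  (mu : {measure set (Rd R d) -> \bar R}) : set 'rV[R]_d :=
  [set x | forall e : R, 0 < e -> (0 < mu (ball x e : set (Rd R d)))%E].

Definition Cp (R : realType) (d : nat) (X : set 'rV[R]_d)
  (f : 'rV[R]_d -> R) : Prop :=
  {within X, continuous f} /\
  exists (C : R) (n : nat), forall x, X x -> `|f x| <= C * (1 + `|x|) ^+ n.

Definition gap (R : realType) (d : nat) (X : set 'rV[R]_d)
  (mu : {measure set (Rd R d) -> \bar R}) (f : 'rV[R]_d -> R) : \bar R :=
  ereal_inf [set (\int[mu]_(x in (X : set (Rd R d))) (f x - peval p x)%:E)%E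
            | p in [set p : mpoly.mpoly d R | forall x, X x -> peval p x <= f x]].

(* Main.v *)
Set Warnings "-all".
Require Import Defs.
From HB Require Import structures.
From mathcomp Require Import all_boot all_order all_algebra.
From mathcomp Require Import all_classical all_reals all_analysis.
From mathcomp Require mpoly.
From mathcomp Require Import lra.
Import Order.TTheory GRing.Theory Num.Theory.
Import numFieldNormedType.Exports.
Local Open Scope classical_set_scope.
Local Open Scope ring_scope.

Section Helpers.
Import HBNNSimple.

Lemma int_le_null d (T : measurableType d) (R : realType)
  (mu : {measure set T -> \bar R}) (D N : set T) (f g : T -> \bar R) :
  measurable N -> mu N = 0%E ->
  (forall x, D x -> 0 <= f x)%E -> (forall x, D x -> 0 <= g x)%E ->
  (forall x, D x -> ~ N x -> f x <= g x)%E ->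
  (\int[mu]_(x in D) f x <= \int[mu]_(x in D) g x)%E.
Proof.
move=> mN N0 f0 g0 fg.
rewrite (ge0_integralE _ f0) (ge0_integralE _ g0).
apply: ge_ereal_sup => _ [h hf <-].
have mCN : measurable (~` N) by exact: measurableC.
pose h' := mul_nnsfun h (indic_nnsfun R mCN).
have h'E x : h' x = h x * \1_(~` N) x by [].
have -> : sintegral mu h = sintegral mu h'.
  rewrite -!integralT_nnsfun; apply: ae_eq_integral => //.
    by apply/measurable_realfun.measurable_EFinP; exact: measurable_funPT.
    by apply/measurable_realfun.measurable_EFinP; exact: measurable_funPT.
  exists N; split => // x /= H; apply: contrapT => Nx; apply: H => _ /=.
  by change ((h x)%:E = (h' x)%:E); rewrite h'E indicE mem_set ?mulr1.
apply: ereal_sup_ubound. exists h' => // x.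
rewrite h'E indicE; have [/set_mem Nx|/negP Nx] := boolP (x \in ~` N).
  rewrite mulr1; apply: (le_trans (hf x)); rewrite !patchE.
  case: ifPn => // /set_mem Dx; apply: fg => //.
by rewrite mulr0 patchE; case: ifPn => // /set_mem Dx; exact: g0.
Qed.

Lemma ball_meas (R : realType) (d : nat) (x : 'rV[R]_d) e :
  measurable (ball x e : set (Rd R d)).
Proof. exact: sub_sigma_algebra (ball_open x e). Qed.

Lemma rat_ball (R : realType) (d : nat) (x : 'rV[R]_d) e : 0 < e ->
  exists q : 'rV[rat]_d, ball x e (map_mx ratr q).
Proof.
move=> e0.
have /fin_all_exists [f Hf] : forall j : 'I_d, exists q : rat, ratr q \in `](x ord0 j - e), (x ord0 j + e)[.
  move=> j; apply: rat_in_itvoo; rewrite ltrBlDr -addrA ltrDl; exact: addr_gt0.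
exists (\row_j f j); split => // i j.
rewrite (ord1 i) /ball /= !mxE.
move: (Hf j); rewrite in_itv /= => /andP[h1 h2].
rewrite ltr_norml; apply/andP; split; lra.
Qed.

Lemma null_cover (R : realType) (d : nat) (mu : {measure set (Rd R d) -> \bar R}) :
  exists N : set (Rd R d), measurable N /\ mu N = 0%E /\
    (forall x, ~ msupport mu x -> N x).
Proof.
pose B (q : 'rV[rat]_d * rat) : set (Rd R d) := ball (map_mx ratr q.1 : 'rV[R]_d) (ratr q.2 : R).
pose F (n : nat) : set (Rd R d) :=
  match (unpickle n : option ('rV[rat]_d * rat)) with
  | Some q => if mu (B q) == 0%E then B q else set0
  | None => set0 end.
have mF n : measurable (F n).
  rewrite /F; case: (unpickle n) => [q|]//; case: ifP => // _; exact: ball_meas.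
have F0 n : mu (F n) = 0%E.
  rewrite /F; case: (unpickle n) => [q|]; last exact: measure0.
  by case: ifP => [/eqP//|_]; exact: measure0.
exists (\bigcup_n F n); split; first exact: bigcupT_measurable.
split.
  apply/eqP; rewrite eq_le measure_ge0 andbT.
  have := @measure_sigma_subadditive _ _ _ mu _ F mF (bigcupT_measurable F mF) (@subset_refl _ _).
  rewrite eseries0 //.
move=> x /existsNP [e /not_implyP [e0 /negP]]; rewrite -leNgt => mue.
have mue0 : mu (ball x e : set (Rd R d)) = 0%E.
  by apply/eqP; rewrite eq_le mue measure_ge0.
have e30 : 0 < e / 3 by rewrite divr_gt0.
have [q Hq] := @rat_ball R d x _ e30.
have [r] := @rat_in_itvoo R (e / 3) (e * 2 / 3) ltac:(lra).
rewrite in_itv /= => /andP [r1 r2].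
have sub : B (q, r) `<=` ball x e.
  move=> y /= Hy; apply: (@le_ball _ _ _ (e / 3 + ratr r)); first lra.
  exact: ball_triangle Hq Hy.
have muB : mu (B (q, r)) = 0%E.
  apply/eqP; rewrite eq_le measure_ge0 andbT -mue0.
  by apply: le_measure => //; rewrite inE; [exact: ball_meas|exact: ball_meas].
exists (pickle (q, r)) => //.
rewrite /F pickleK muB eqxx /B /=.
apply: (@le_ball _ _ _ (e / 3)); first lra.
exact: ball_sym.
Qed.

End Helpers.

Theorem mainTheorem6 (R : realType) (d : nat) (X : set 'rV[R]_d)
  (mu : {measure set (Rd R d) -> \bar R})
  (phi psi : 'rV[R]_d -> R) :
  closed X ->
  admissible X mu ->
  X_indeterminate X mu ->
  Cp X phi ->
  (0 < gap X mu phi)%E ->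
  Cp X psi ->
  (forall x, X x -> ~ msupport mu x -> psi x <= phi x) ->
  (0 < gap X mu (fun x => if x \in msupport mu then phi x else psi x))%E.
Proof.
move=> cX adm ind Cphi gphi Cpsi hpsi.
apply: (lt_le_trans gphi).
have [N [mN [N0 HN]]] := @null_cover R d mu.
apply/ereal_infP => _ [p /= hp <-].
have hp' : forall x, X x -> peval p x <= phi x.
  move=> x Xx; apply: le_trans (hp x Xx) _.
  case: ifPn => [//|/negP nS]; apply: hpsi => // Sx; apply: nS; exact: mem_set.
apply: (@le_trans _ _ (\int[mu]_(x in (X : set (Rd R d))) (phi x - peval p x)%:E)%E).
  by apply: ereal_inf_lbound; exists p.
apply: int_le_null mN N0 _ _ _.
- by move=> x Xx; rewrite lee_fin subr_ge0; exact: hp'.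
- by move=> x Xx; rewrite lee_fin subr_ge0; exact: hp.
- move=> x Xx nN; have Sx : msupport mu x by apply: contrapT => /HN.
  by rewrite mem_set.
Qed.
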